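(* Let $\mathbb{X}$ be a reflexive Kadets-Klee real Banach space and $\mathbb{Y}$ any real Banach space (both of dimension greater than $1$). Let $T\in\mathbb{K}(\mathbb{X},\mathbb{Y})$ with $\|T\|=1$ be a smooth point of $\mathbb{K}(\mathbb{X},\mathbb{Y})$. Then for each $\epsilon>0$, $T$ admits a uniform $\epsilon$-BPB approximation $A\in\mathbb{L}(\mathbb{X},\mathbb{Y})$ with $A\neq T$.
   Context: $\mathbb{K}(\mathbb{X},\mathbb{Y})$ (resp. $\mathbb{L}(\mathbb{X},\mathbb{Y})$) denotes the compact (resp. bounded) linear operators with the operator norm; $S_{\mathbb{X}}$ is the unit sphere. $\mathbb{X}$ is Kadets-Klee if $x_n\to x$ weakly and $\|x_n\|\to\|x\|$ imply $\|x_n-x\|\to0$. A nonzero element $x$ of a Banach space $\mathbb{Z}$ is a smooth point if there is a unique $f\in\mathbb{Z}^*$ with $\|f\|=1$ and $f(x)=\|x\|$. For $T$ with $\|T\|=1$ and fixed $\epsilon>0$, an operator $A\in\mathbb{L}(\mathbb{X},\mathbb{Y})$ with $\|A\|=1$ is a uniform $\epsilon$-BPB approximation of $T$ if there exists $\delta(\epsilon)>0$ such that whenever $x_0\in S_{\mathbb{X}}$ satisfies $\|Tx_0\|>1-\delta(\epsilon)$, there exists $u_0\in S_{\mathbb{X}}$ with $\|Au_0\|=1$, $\|u_0-x_0\|<\epsilon$ and $\|A-T\|<\epsilon$. Such an $A$ is called nontrivial if $A\neq T$. *)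

(* Defs.v *)
From HB Require Import structures.
From mathcomp Require Import all_boot all_order all_algebra.
From mathcomp Require Import all_classical all_reals all_analysis.
Set Implicit Arguments. Unset Strict Implicit. Unset Printing Implicit Defensive.
Import Order.TTheory GRing.Theory Num.Theory.
Import numFieldNormedType.Exports.
Local Open Scope classical_set_scope.
Local Open Scope ring_scope.

Section Defs.
Variable R : realType.

Definition is_linear (U V : lmodType R) (f : U -> V) : Prop :=
  forall (a : R) (x y : U), f (a *: x + y) = a *: f x + f y.

Definition dim_gt1 (U : lmodType R) : Prop :=
  exists x y : U, forall a b : R, a *: x + b *: y = 0 -> a = 0 /\ b = 0.

Variables (X Y : normedModType R).

Definition unit_ball : set X := [set x | `|x| <= 1].

Definition bounded_linear (f : X -> Y) : Prop :=
  is_linear f /\ exists M : R, forall x, `|f x| <= M * `|x|.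

Definition opnorm (f : X -> Y) : R := sup [set `|f x| | x in unit_ball].

Definition compact_op (f : X -> Y) : Prop :=
  is_linear f /\ compact (closure (f @` unit_ball)).

Definition op_add (f g : X -> Y) : X -> Y := fun x => f x + g x.
Definition op_scale (a : R) (f : X -> Y) : X -> Y := fun x => a *: f x.

Definition Kdual (phi : (X -> Y) -> R) : Prop :=
  (forall (a : R) (S1 S2 : X -> Y), compact_op S1 -> compact_op S2 ->
     phi (op_add (op_scale a S1) S2) = a * phi S1 + phi S2) /\
  exists M : R, forall S, compact_op S -> `|phi S| <= M * opnorm S.

Definition Kdual_norm (phi : (X -> Y) -> R) : R :=
  sup [set `|phi S| | S in [set S | compact_op S /\ opnorm S <= 1]].

(* T is a smooth point of K(X,Y): T <> 0 and the norming functional of norm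
   one is unique (as a functional on K(X,Y)). *)
Definition smooth_point_K (T : X -> Y) : Prop :=
  compact_op T /\ T <> (fun _ => 0) /\
  exists phi, [/\ Kdual phi, Kdual_norm phi = 1, phi T = opnorm T &
    forall psi, Kdual psi -> Kdual_norm psi = 1 -> psi T = opnorm T ->
      forall S, compact_op S -> psi S = phi S].

Definition uniform_BPB_approx (T A : X -> Y) (eps : R) : Prop :=
  bounded_linear A /\ opnorm A = 1 /\
  exists delta : R, 0 < delta /\
    forall x0 : X, `|x0| = 1 -> `|T x0| > 1 - delta ->
      exists u0 : X, [/\ `|u0| = 1, `|A u0| = 1, `|u0 - x0| < eps &
                         opnorm (fun x => A x - T x) < eps].

End Defs.

Section DualDefs.
Variable R : realType.
Variable X : normedModType R.

Definition dual_elt (f : X -> R) : Prop :=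
  is_linear (f : X -> R^o) /\ exists M : R, forall x, `|f x| <= M * `|x|.

Definition dual_norm (f : X -> R) : R :=
  sup [set `|f x| | x in [set x : X | `|x| <= 1]].

Definition bidual_elt (Phi : (X -> R) -> R) : Prop :=
  (forall (a : R) (f g : X -> R), dual_elt f -> dual_elt g ->
     Phi (fun x => a * f x + g x) = a * Phi f + Phi g) /\
  exists M : R, forall f, dual_elt f -> `|Phi f| <= M * dual_norm f.

Definition reflexive_space : Prop :=
  forall Phi, bidual_elt Phi -> exists x : X, forall f, dual_elt f -> Phi f = f x.

Definition weak_cvg (u : nat -> X) (x : X) : Prop :=
  forall f, dual_elt f -> (fun n => f (u n)) @ \oo --> f x.

Definition kadets_klee : Prop :=
  forall (u : nat -> X) (x : X), weak_cvg u x ->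
    (fun n => `|u n|) @ \oo --> `|x| -> (fun n => `|u n - x|) @ \oo --> 0.

End DualDefs.

(* Main.v *)
Require Import Defs.
From HB Require Import structures.
From mathcomp Require Import all_boot all_order all_algebra.
From mathcomp Require Import all_classical all_reals all_analysis.
From mathcomp Require Import lra.
Import Order.TTheory GRing.Theory Num.Theory.
Import numFieldNormedType.Exports.
Local Open Scope classical_set_scope.
Local Open Scope ring_scope.
Set Implicit Arguments. Unset Strict Implicit. Unset Printing Implicit Defensive.

Section HahnBanach.
Variables (R : realType) (X : normedModType R).

Definition sublin (q : X -> R) :=
  (forall a b, q (a + b) <= q a + q b) /\ (forall t x, 0 <= t -> q (t *: x) <= t * q x).

Lemma sublin0 q : sublin q -> q 0 = 0.
Proof.
move=> [sa sh]; have h1 := sh 0 0 (lexx _); rewrite scale0r mul0r in h1.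
have h2 := sa 0 0; rewrite addr0 in h2; lra.
Qed.

Lemma sublinZ q t x : sublin q -> 0 <= t -> q (t *: x) = t * q x.
Proof.
move=> [sa sh] t0; apply/eqP; rewrite eq_le sh //=.
have [->|tn0] := eqVneq t 0.
  rewrite scale0r mul0r; have := sublin0 (conj sa sh); lra.
have tp : 0 < t by rewrite lt_def tn0.
have := sh t^-1 (t *: x); rewrite invr_ge0 scalerA mulVf // scale1r => /(_ t0 ) h.
by have := ler_wpM2l t0 h; rewrite mulrA mulfV // mul1r.
Qed.

Lemma sublin_lb q z y t : sublin q -> 0 <= t -> - q (- z) <= q (z + t *: y) - t * q y.
Proof.
move=> sq t0; have [sa _] := sq.
have := sa (z + t *: y) (- z); rewrite addrAC subrr add0r sublinZ //; lra.
Qed.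

Definition qdir (q : X -> R) (y : X) (z : X) : R :=
  inf [set q (z + t *: y) - t * q y | t in [set t : R | 0 <= t]].

Lemma qdir_le q y z t : sublin q -> 0 <= t -> qdir q y z <= q (z + t *: y) - t * q y.
Proof.
move=> sq t0; apply: ge_inf; last by exists t.
exists (- q (- z)) => _ [s s0 <-]; exact: sublin_lb.
Qed.

Lemma qdir_ge q y z c : (forall t, 0 <= t -> c <= q (z + t *: y) - t * q y) -> c <= qdir q y z.
Proof.
move=> h; apply: lb_le_inf; first by exists (q (z + 0 *: y) - 0 * q y); exists 0; rewrite /= ?inE.
by move=> _ [s s0 <-]; exact: h.
Qed.

Lemma qdir_sublin q y : sublin q -> sublin (qdir q y).
Proof.
move=> sq; have [sa sh] := sq; split.
- move=> a b.
  suff h : forall t1 t2, 0 <= t1 -> 0 <= t2 ->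
     qdir q y (a + b) <= (q (a + t1 *: y) - t1 * q y) + (q (b + t2 *: y) - t2 * q y).
    have : qdir q y (a + b) - qdir q y b <= qdir q y a.
      apply: qdir_ge => t1 t1p; rewrite lerBlDr addrC -lerBlDl.
      apply: qdir_ge => t2 t2p; rewrite lerBlDl addrC; exact: h.
    lra.
  move=> t1 t2 t1p t2p; apply: le_trans (qdir_le _ _ sq (addr_ge0 t1p t2p)) _.
  have := sa (a + t1 *: y) (b + t2 *: y).
  rewrite scalerDl addrACA; lra.
- move=> t x t0; have [->|tn0] := eqVneq t 0.
    rewrite scale0r mul0r; apply: le_trans (qdir_le _ _ sq (lexx 0)) _.
    by rewrite scale0r addr0 mul0r subr0 sublin0.
  have tp : 0 < t by rewrite lt_def tn0.
  rewrite -ler_pdivrMl //; apply: qdir_ge => s s0; rewrite ler_pdivrMl //.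
  apply: le_trans (qdir_le _ _ sq (mulr_ge0 t0 s0)) _.
  rewrite -scalerA -scalerDr sublinZ //; lra.
Qed.

Lemma qdir_leq q y z : sublin q -> qdir q y z <= q z.
Proof. by move=> sq; apply: le_trans (qdir_le _ _ sq (lexx 0)) _; rewrite scale0r addr0 mul0r subr0. Qed.

Lemma qdir_Ny q y : sublin q -> qdir q y (- y) <= - q y.
Proof.
move=> sq; apply: le_trans (qdir_le _ _ sq ler01) _.
by rewrite scale1r addNr sublin0 // mul1r sub0r.
Qed.


Lemma norm_sublin : sublin (fun z : X => `|z|).
Proof.
split; first by move=> a b; exact: ler_normD.
by move=> t x t0; rewrite normrZ ger0_norm.
Qed.

Definition HBset (x0 : X) (q : X -> R) :=
  [/\ sublin q, (forall z, q z <= `|z|) & q (- x0) <= - `|x0|].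

Lemma HBset_lb x0 q z : HBset x0 q -> - `|z| <= q z.
Proof.
move=> [sq qn _]; have [sa _] := sq; have := sa z (- z); rewrite subrr sublin0 //.
have := qn (- z); rewrite normrN; lra.
Qed.

Lemma minimal_linear (q : X -> R) : sublin q ->
  (forall y, qdir q y = q) -> (forall a x y, q (a *: x + y) = a * q x + q y).
Proof.
move=> sq hmin; have [sa sh] := sq.
have qN y : q (- y) = - q y.
  have := qdir_Ny y sq; rewrite hmin => h1.
  have := sa y (- y); rewrite subrr sublin0 //; lra.
have qD x y : q (x + y) = q x + q y.
  apply/eqP; rewrite eq_le sa /=.
  have := sa (- x) (- y); rewrite -opprD !qN; lra.
have qZ a x : q (a *: x) = a * q x.
  have [a0|a0] := leP 0 a; first exact: sublinZ.
  rewrite -[a]opprK scaleNr qN sublinZ ?oppr_ge0 ?ltW //; lra.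
by move=> a x y; rewrite qD qZ.
Qed.

Lemma hahn_banach (x0 : X) : exists h : X -> R,
  [/\ (forall a x y, h (a *: x + y) = a * h x + h y), (forall z, `|h z| <= `|z|) & h x0 = `|x0|].
Proof.
pose T := {q : X -> R | HBset x0 q}.
pose Rq (s t : T) := `[< forall z, sval t z <= sval s z >].
have q0P : HBset x0 (qdir (fun z : X => `|z|) x0).
  split; first exact: qdir_sublin norm_sublin.
  - by move=> z; exact: qdir_leq norm_sublin.
  - exact: qdir_Ny norm_sublin.
have [t tmin] : exists t, forall s, Rq t s -> s = t.
  apply: Zorn.
  - by move=> t; apply/asboolP => z.
  - move=> r s t /asboolP h1 /asboolP h2; apply/asboolP => z; exact: le_trans (h2 z) (h1 z).
  - move=> [s sP] [t tP] /asboolP h1 /asboolP h2.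
    have st : s = t by apply/funext => z; apply/eqP; rewrite eq_le h1 h2.
    subst t; congr exist; exact: Prop_irrelevance.
  - move=> A Atot.
    case: (pselect (exists a, A a)) => [[a0 Aa0]|nA]; last first.
      by exists (exist _ _ q0P) => s As; exfalso; apply: nA; exists s.
    pose m z := inf [set sval q z | q in A].
    have mlb z : has_lbound [set sval q z | q in A].
      by exists (- `|z|) => _ [q _ <-]; apply: HBset_lb (svalP q).
    have mle q z : A q -> m z <= sval q z.
      by move=> Aq; apply: ge_inf => //; exists q.
    have mge z c : (forall q, A q -> c <= sval q z) -> c <= m z.
      move=> h; apply: lb_le_inf; first by exists (sval a0 z); exists a0.
      by move=> _ [q Aq <-]; exact: h.
    have mP : HBset x0 m.
      split; first split.
      - move=> a b.
        suff h : forall q1 q2, A q1 -> A q2 -> m (a + b) <= sval q1 a + sval q2 b.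
          have : m (a + b) - m b <= m a.
            apply: (mge) => q1 Aq1; rewrite lerBlDr addrC -lerBlDl.
            apply: (mge) => q2 Aq2; rewrite lerBlDl addrC; exact: h.
          lra.
        move=> q1 q2 Aq1 Aq2.
        have [s1 _ _] := svalP q1; have [s2 _ _] := svalP q2.
        case: (Atot q1 q2 Aq1 Aq2) => /asboolP hq.
        + apply: le_trans (mle q2 _ Aq2) _; apply: le_trans (s2.1 a b) _.
          by rewrite lerD2r hq.
        + apply: le_trans (mle q1 _ Aq1) _; apply: le_trans (s1.1 a b) _.
          by rewrite lerD2l hq.
      - move=> t x t0; have [->|tn0] := eqVneq t 0.
          rewrite scale0r mul0r; apply: le_trans (mle a0 _ Aa0) _.
          by have [s1 _ _] := svalP a0; rewrite (sublin0 s1).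
        have tp : 0 < t by rewrite lt_def tn0.
        rewrite -ler_pdivrMl //; apply: (mge) => q Aq; rewrite ler_pdivrMl //.
        apply: le_trans (mle q _ Aq) _; have [s1 _ _] := svalP q; exact: s1.2.
      - by move=> z; apply: le_trans (mle a0 _ Aa0) _; have [_ ? _] := svalP a0.
      - by apply: le_trans (mle a0 _ Aa0) _; have [_ _ ?] := svalP a0.
    exists (exist _ _ mP) => s As; apply/asboolP => z /=; exact: mle.
have [sq qn qx0] := svalP t.
have hmin : forall y, qdir (sval t) y = sval t.
  move=> y.
  have sP : HBset x0 (qdir (sval t) y).
    split; first exact: qdir_sublin.
    - by move=> z; apply: le_trans (qdir_leq _ _ sq) _.
    - by apply: le_trans (qdir_leq _ _ sq) _.
  have e : exist _ _ sP = t by apply: tmin; apply/asboolP => z; exact: qdir_leq.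
  exact: (congr1 sval e).
have lin := minimal_linear sq hmin.
exists (sval t); split => //.
- move=> z; rewrite ler_norml qn andbT.
  have := qn (- z); rewrite normrN.
  have := lin (-1) z 0; rewrite addr0 scaleN1r mulN1r; rewrite [sval t 0](_ : _ = 0) ?addr0.
    move=> ->; lra.
  exact: sublin0.
- have := lin (-1) x0 0; rewrite addr0 scaleN1r mulN1r sublin0 // addr0 => e.
  rewrite e in qx0; apply/eqP; rewrite eq_le qn /=; lra.
Qed.

End HahnBanach.

Section Lin.
Variables (R : realType) (U V : lmodType R).
Variable f : U -> V.
Hypothesis fl : is_linear f.
Lemma lin0 : f 0 = 0.
Proof. have h := fl 1 0 0; rewrite !scale1r addr0 in h; apply: (addrI (f 0)); by rewrite addr0 -h. Qed.
Lemma linZ a x : f (a *: x) = a *: f x.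
Proof. by have := fl a x 0; rewrite addr0 lin0 addr0. Qed.
Lemma linD x y : f (x + y) = f x + f y.
Proof. by have := fl 1 x y; rewrite !scale1r. Qed.
Lemma linN x : f (- x) = - f x.
Proof. by rewrite -scaleN1r linZ scaleN1r. Qed.
Lemma linB x y : f (x - y) = f x - f y.
Proof. by rewrite linD linN. Qed.
End Lin.

Section Ops.
Variables (R : realType) (X Y : normedModType R).
Implicit Types (f g : X -> Y).

Lemma ball0 : @unit_ball R X 0.
Proof. by rewrite /unit_ball /= normr0. Qed.

Lemma bound_scale f (M : R) : is_linear f ->
  (forall x : X, `|x| <= 1 -> `|f x| <= M) -> forall x, `|f x| <= M * `|x|.
Proof.
move=> fl h x; have [->|xn0] := eqVneq x 0; first by rewrite lin0 // !normr0 mulr0.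
have nx : 0 < `|x| by rewrite normr_gt0.
have hx1 : `|(`|x|^-1 *: x)| <= 1.
  by rewrite normrZ ger0_norm ?invr_ge0 ?normr_ge0 // mulVf ?gt_eqF.
have := h _ hx1; rewrite linZ // normrZ ger0_norm ?invr_ge0 ?normr_ge0 // => hh.
by rewrite -ler_pdivrMr // mulrC.
Qed.

Lemma opnorm_hasub f : is_linear f -> (exists M, forall x, `|f x| <= M * `|x|) ->
  has_sup [set `|f x| | x in @unit_ball R X].
Proof.
move=> fl [M hM]; split; first by exists `|f 0|, 0; first exact: ball0.
exists `|M| => _ [x bx <-]; apply: le_trans (hM x) _.
apply: le_trans (ler_wpM2r (normr_ge0 _) (ler_norm M)) _.
by rewrite -[X in _ <= X]mulr1 ler_wpM2l.
Qed.

Lemma opnorm_ball f x : is_linear f -> (exists M, forall x, `|f x| <= M * `|x|) ->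
  `|x| <= 1 -> `|f x| <= opnorm f.
Proof.
move=> fl hb bx; have [_ hu] := opnorm_hasub fl hb.
by apply: ub_le_sup => //; exists x.
Qed.

Lemma opnorm_ge0 f : is_linear f -> (exists M, forall x, `|f x| <= M * `|x|) -> 0 <= opnorm f.
Proof. by move=> fl hb; apply: le_trans (opnorm_ball fl hb ball0); rewrite normr_ge0. Qed.

Lemma opnorm_bound f x : is_linear f -> (exists M, forall x, `|f x| <= M * `|x|) ->
  `|f x| <= opnorm f * `|x|.
Proof. by move=> fl hb; apply: bound_scale => // y; exact: opnorm_ball. Qed.

Lemma opnorm_le f c : (forall x : X, `|x| <= 1 -> `|f x| <= c) -> opnorm f <= c.
Proof.
move=> h; apply: ge_sup; first by exists `|f 0|, 0; first exact: ball0.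
by move=> _ [x bx <-]; exact: h.
Qed.

Lemma opnorm_le2 f c : 0 <= c -> (forall x : X, `|f x| <= c * `|x|) -> opnorm f <= c.
Proof.
move=> c0 h; apply: opnorm_le => x bx; apply: le_trans (h x) _.
by rewrite -[X in _ <= X]mulr1 ler_wpM2l.
Qed.

Lemma compact_op_bounded f : compact_op f -> exists M, forall x, `|f x| <= M * `|x|.
Proof.
move=> [fl cf]; have := compact_bounded cf => /pinfty_ex_gt0 [M M0 hM].
exists M; apply: bound_scale => // x bx; apply: hM; apply: subset_closure; by exists x.
Qed.

Lemma opnorm_adherent f d : is_linear f -> (exists M, forall x, `|f x| <= M * `|x|) ->
  0 < d -> exists x, `|x| <= 1 /\ opnorm f - d < `|f x|.
Proof.
move=> fl hb d0; have [x [y yb <-] hx] := sup_adherent d0 (opnorm_hasub fl hb).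
by exists y.
Qed.

End Ops.

Lemma ultra_lim_exists (T : topologicalType) (U : set_system nat) (u : nat -> T) (K : set T) :
  UltraFilter U -> compact K -> (forall n, K (u n)) -> exists2 l, K l & u @ U --> l.
Proof.
move=> UU cK Ku.
have FK : (u @ U) K by rewrite /fmap /=; apply: filterS filterT => n _; exact: Ku.
have [l [Kl cl]] := cK _ _ FK.
exists l => // B nB.
have [//|hC] := in_ultra_setVsetC (u @^-1` B) UU.
have : (u @ U) (~` B) by [].
move=> FnB; have [z [nBz Bz]] := cl _ _ FnB nB; by [].
Qed.

Lemma ultra_lim_R (R : realType) (U : set_system nat) (a : nat -> R) (M : R) :
  UltraFilter U -> (forall n, `|a n| <= M) -> exists l : R, a @ U --> l.
Proof.
move=> UU h.
have hK : forall n, `[- M, M]%classic (a n) by move=> n; rewrite /= in_itv /= -ler_norml.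
have [l _ hl] := @ultra_lim_exists _ U a `[- M, M] UU (@segment_compact _ _ _) hK.
by exists l.
Qed.

Section LinCvg.
Variables (R : realType) (V W : normedModType R).
Lemma lincvg (g : V -> W) (c : R) (I : Type) (F : set_system I) (FF : Filter F) (u : I -> V) y :
  is_linear g -> (forall v, `|g v| <= c * `|v|) -> u @ F --> y -> (fun t => g (u t)) @ F --> g y.
Proof.
move=> gl gb /cvgrPdist_lt hu; apply/cvgrPdist_lt => e e0.
have c1 : 0 < `|c| + 1 by rewrite ltr_pwDr // normr_ge0.
have := hu (e / (`|c| + 1)) (divr_gt0 e0 c1); apply: filterS => t ht.
rewrite -linB //; apply: le_lt_trans (gb _) _.
apply: le_lt_trans (ler_wpM2r (normr_ge0 _) (ler_norm c)) _.
apply: le_lt_trans (ler_wpM2r (normr_ge0 _) (ler_wpDr ler01 (lexx `|c|))) _.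
by rewrite mulrC -ltr_pdivlMr.
Qed.
End LinCvg.

Section Weak.
Variables (R : realType) (X : normedModType R).

Lemma dual_lin (f : X -> R) : dual_elt f -> forall a x y, f (a *: x + y) = a * f x + f y.
Proof. by move=> [fl _]. Qed.

Lemma dual_bound (f : X -> R) x : dual_elt f -> `|f x| <= dual_norm f * `|x|.
Proof. by move=> [fl fb]; exact: (@opnorm_bound R X R^o). Qed.

Lemma dual_norm_ge0 (f : X -> R) : dual_elt f -> 0 <= dual_norm f.
Proof. by move=> [fl fb]; exact: (@opnorm_ge0 R X R^o). Qed.

Lemma HB_dual (x0 : X) : exists h : X -> R,
  [/\ dual_elt h, (forall z, `|h z| <= `|z|) & h x0 = `|x0|].
Proof.
have [h [hl hb hx]] := hahn_banach x0; exists h; split => //.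
split; first exact: hl.
by exists 1 => z; rewrite mul1r.
Qed.

Lemma dual_sep (z : X) : (forall f, dual_elt f -> f z = 0) -> z = 0.
Proof.
move=> h; have [g [gd _ gz]] := HB_dual z.
by apply/normr0_eq0; rewrite -gz h.
Qed.

Lemma weak_ulim (U : set_system nat) (UU : UltraFilter U) (x : nat -> X) :
  reflexive_space X -> (forall n, `|x n| <= 1) ->
  exists z : X, forall f, dual_elt f -> (fun n => f (x n)) @ U --> f z.
Proof.
move=> refl hx.
have hbd : forall f n, dual_elt f -> `|f (x n)| <= dual_norm f.
  move=> f n fd; apply: le_trans (dual_bound _ fd) _.
  by rewrite -[X in _ <= X]mulr1 ler_wpM2l // dual_norm_ge0.
have hc : forall f, dual_elt f -> (fun n => f (x n)) @ U --> lim ((fun n => f (x n)) @ U).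
  move=> f fd.
  have hb : forall n, `|f (x n)| <= dual_norm f by move=> n; exact: hbd.
  have [l hl] := @ultra_lim_R R U (fun n => f (x n)) (dual_norm f) UU hb.
  by rewrite (cvg_lim (@norm_hausdorff _ _) hl).
have bd : bidual_elt (fun f => lim ((fun n => f (x n)) @ U)).
  split.
  - move=> a f g fd gd.
    apply: (cvg_lim (@norm_hausdorff _ _)).
    apply: cvgD; last exact: hc.
    by apply: cvgMl_tmp; exact: hc.
  - exists 1 => f fd; rewrite mul1r ler_norml; apply/andP; split.
    + apply: (closed_cvg _ (@closed_ge _ _) _ _ (hc f fd)).
      apply: filterS filterT => n _ /=.
      by have := hbd f n fd; rewrite ler_norml => /andP[].
    + apply: (closed_cvg _ (@closed_le _ _) _ _ (hc f fd)).
      apply: filterS filterT => n _ /=.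
      by have := hbd f n fd; rewrite ler_norml => /andP[].
have [z hz] := refl _ bd.
by exists z => f fd; rewrite -hz //; exact: hc.
Qed.

End Weak.

Section Main.
Variables (R : realType) (X Y : normedModType R) (T : X -> Y).
Hypotheses (refl : reflexive_space X) (cT : compact_op T) (nT : opnorm T = 1).

Let Tl : is_linear T. Proof. by case: cT. Qed.
Let Tb : exists M, forall x, `|T x| <= M * `|x|. Proof. exact: compact_op_bounded. Qed.

Lemma T_le x : `|T x| <= `|x|.
Proof. by have := opnorm_bound x Tl Tb; rewrite nT mul1r. Qed.

Lemma dual_comp (g : Y -> R) : dual_elt g -> dual_elt (fun x => g (T x)).
Proof.
move=> gd; split.
  by move=> a x y /=; rewrite Tl (dual_lin gd).
exists (dual_norm g) => x; apply: le_trans (dual_bound _ gd) _.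
by rewrite ler_wpM2l // ?dual_norm_ge0 // T_le.
Qed.

Lemma norming_ulim (U : set_system nat) (UU : UltraFilter U) (x : nat -> X) :
  (forall n, `|x n| <= 1) -> \oo `<=` U -> (fun n => `|T (x n)|) @ \oo --> (1 : R) ->
  exists z, [/\ `|z| = 1, `|T z| = 1 & forall f, dual_elt f -> (fun n => f (x n)) @ U --> f z].
Proof.
move=> hx oU hT1.
have [z hz] := weak_ulim UU refl hx.
have [cl cc] := cT.
have KT : forall n, closure (T @` (@unit_ball R X)) (T (x n)).
  by move=> n; apply: subset_closure; apply: imageP; exact: hx.
have [y _ hy] := @ultra_lim_exists _ U (fun n => T (x n)) _ UU cc KT.
have yTz : y = T z.
  apply/eqP; rewrite -subr_eq0; apply/eqP; apply: dual_sep => g gd.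
  have e1 : (fun n => g (T (x n))) @ U --> g y.
    exact: (@lincvg R Y R^o g (dual_norm g) _ U _ _ _ (proj1 gd) (fun v => dual_bound v gd) hy).
  have e2 : (fun n => g (T (x n))) @ U --> g (T z) by exact: hz (dual_comp gd).
  rewrite (linB (proj1 gd)).
  have -> : g y = g (T z) by exact: (cvg_unique _ e1 e2).
  by rewrite subrr.
have ny : `|y| = 1.
  have e1 : (fun n => `|T (x n)|) @ U --> `|y| by exact: cvg_norm hy.
  have e2 : (fun n => `|T (x n)|) @ U --> (1 : R) by move=> B /hT1; exact: oU.
  exact: (cvg_unique _ e1 e2).
have nz1 : `|z| <= 1.
  have [h [hd hb hz0]] := HB_dual z.
  rewrite -hz0; apply: (closed_cvg _ (@closed_le _ _) _ _ (hz h hd)).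
  apply: filterS filterT => n _ /=.
  exact: le_trans (ler_norm _) (le_trans (hb _) (hx n)).
exists z; split => //; last by rewrite -yTz.
apply/eqP; rewrite eq_le nz1 /=; rewrite -ny yTz; exact: T_le.
Qed.

Lemma exists_norming : exists x0, `|x0| = 1 /\ `|T x0| = 1.
Proof.
have hseq : forall n : nat, exists x, `|x| <= 1 /\ 1 - n.+1%:R^-1 < `|T x|.
  move=> n; have := @opnorm_adherent R X Y T n.+1%:R^-1 Tl Tb.
  by rewrite nT invr_gt0 ltr0Sn => /(_ isT).
have [x hx] := choice hseq.
have c1 : (fun n => `|T (x n)|) @ \oo --> (1:R).
  apply/cvgrPdist_lt; suff key : forall e : R, 0 < e -> \forall n \near \oo, `|1 - (`|T (x n)|)| < e by [].
  move=> e e0; near=> n.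
  have [h1 h2] := hx n; have h3 := T_le (x n).
  have h4 : n.+1%:R^-1 < e by near: n; exact: (near_infty_natSinv_lt (PosNum e0)).
  set c := (n.+1%:R^-1 : R) in h2 h4; rewrite ger0_norm; lra.
Unshelve. all: try by end_near.
have [U [UU oU]] := @ultraFilterLemma nat \oo _.
have [z [? ? _]] := norming_ulim UU (fun n => (hx n).1) oU c1.
by exists z.
Qed.

Lemma rank_one_compact (h : X -> R) (y : Y) : dual_elt h -> compact_op (fun z => h z *: y).
Proof.
move=> hd; split.
  by move=> a x z /=; rewrite (dual_lin hd) scalerDl scalerA.
set M := dual_norm h.
set K := (fun t : R => t *: y) @` `[- M, M].
have cK : compact K.
  apply: continuous_compact; last exact: segment_compact.
  apply: continuous_subspaceT; exact: scalel_continuous.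
have clK : closed K by apply: compact_closed => //; exact: norm_hausdorff.
have sub : closure ((fun z => h z *: y) @` (@unit_ball R X)) `<=` K.
  rewrite (closure_id K).1 //; apply: closureS.
  move=> _ [z zb <-]; apply: imageP; rewrite /= in_itv /= -ler_norml.
  apply: le_trans (dual_bound _ hd) _.
  by rewrite -[X in _ <= X]mulr1 ler_wpM2l // dual_norm_ge0.
have cc : closed (closure ((fun z => h z *: y) @` (@unit_ball R X))) by exact: closed_closure.
exact: (subclosed_compact cc cK sub).
Qed.

Lemma compact_op_le (S : X -> Y) x : compact_op S -> `|S x| <= opnorm S * `|x|.
Proof. move=> cS; apply: opnorm_bound; [exact: cS.1 | exact: compact_op_bounded]. Qed.

Lemma psi_Kdual (x1 : X) (g : Y -> R) : `|x1| = 1 -> dual_elt g -> (forall v, `|g v| <= `|v|) ->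
  g (T x1) = 1 -> Kdual (fun S : X -> Y => g (S x1)) /\ Kdual_norm (fun S : X -> Y => g (S x1)) = 1.
Proof.
move=> n1 gd gb gT.
have bnd : forall S, compact_op S -> `|g (S x1)| <= opnorm S.
  move=> S cS; apply: le_trans (gb _) _.
  by have := compact_op_le x1 cS; rewrite n1 mulr1.
split.
  split; first by move=> a S1 S2 _ _; rewrite /op_add /op_scale (dual_lin gd).
  by exists 1 => S cS; rewrite mul1r; exact: bnd.
apply/eqP; rewrite eq_le; apply/andP; split.
  apply: ge_sup; first by exists `|g (T x1)|; exists T => //; split => //; rewrite nT.
  by move=> _ [S [cS nS] <-]; exact: le_trans (bnd _ cS) nS.
have hub : has_ubound [set `|g (S x1)| | S in [set S | compact_op S /\ opnorm S <= 1]].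
  by exists 1 => _ [S [cS nS] <-]; exact: le_trans (bnd _ cS) nS.
apply: le_trans (ub_le_sup hub _); last by exists T => //; split => //; rewrite nT.
by rewrite gT normr1.
Qed.

Lemma norming_unique x1 x2 : smooth_point_K T ->
  `|x1| = 1 -> `|T x1| = 1 -> `|x2| = 1 -> `|T x2| = 1 -> x1 = x2 \/ x1 = - x2.
Proof.
move=> [_ [_ [phi [_ _ _ phiU]]]] n1 t1 n2 t2.
have [g1 [g1d g1b g1T]] := HB_dual (T x1).
have [g2 [g2d g2b g2T]] := HB_dual (T x2).
rewrite t1 in g1T; rewrite t2 in g2T.
have [k1 kn1] := psi_Kdual n1 g1d g1b g1T.
have [k2 kn2] := psi_Kdual n2 g2d g2b g2T.
have e1 := phiU _ k1 kn1; have e2 := phiU _ k2 kn2.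
rewrite g1T nT in e1; rewrite g2T nT in e2.
have E : forall S, compact_op S -> g1 (S x1) = g2 (S x2).
  by move=> S cS; rewrite (e1 erefl S cS) (e2 erefl S cS).
set c := g2 (T x1).
have hx : x1 = c *: x2.
  apply/eqP; rewrite -subr_eq0; apply/eqP; apply: dual_sep => h hd.
  have := E _ (rank_one_compact (T x1) hd).
  rewrite -[h x1 *: T x1]addr0 -[h x2 *: T x1]addr0 !(dual_lin g1d) !(dual_lin g2d).
  rewrite g1T -/c.
  have -> : g1 0 = 0 by rewrite (lin0 (proj1 g1d)).
  have -> : g2 0 = 0 by rewrite (lin0 (proj1 g2d)).
  rewrite !addr0 mulr1 => hE.
  rewrite (linB (proj1 hd)) -[c *: x2]addr0 (dual_lin hd) (lin0 (proj1 hd)) addr0 hE.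
  by rewrite mulrC subrr.
have nc : `|c| = 1 by have := n1; rewrite hx normrZ n2 mulr1.
move/eqP: nc; rewrite eqr_norml ler01 andbT => /orP [/eqP c1|/eqP c1].
  by left; rewrite hx c1 scale1r.
by right; rewrite hx c1 scaleN1r.
Qed.

Lemma norming_seq_cvg (x : nat -> X) : (forall n, `|x n| <= 1) ->
  (forall n, 1 - n.+1%:R^-1 < `|T (x n)|) -> (fun n => `|T (x n)|) @ \oo --> (1:R).
Proof.
move=> hx1 hx2.
apply/cvgrPdist_lt; suff key : forall e : R, 0 < e -> \forall n \near \oo, `|1 - (`|T (x n)|)| < e by [].
move=> e e0; near=> n.
have h1 := hx1 n; have h2 := hx2 n; have h3 := T_le (x n).
have h4 : n.+1%:R^-1 < e by near: n; exact: (near_infty_natSinv_lt (PosNum e0)).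
set c := (n.+1%:R^-1 : R) in h2 h4; rewrite ger0_norm; lra.
Unshelve. all: by end_near.
Qed.

Lemma clustering x0 : smooth_point_K T -> kadets_klee X -> `|x0| = 1 -> `|T x0| = 1 ->
  forall eta, 0 < eta -> exists delta, 0 < delta /\
    forall x, `|x| = 1 -> 1 - delta < `|T x| -> `|x - x0| < eta \/ `|x + x0| < eta.
Proof.
move=> sm KK n0 t0 eta eta0; apply: contrapT => H.
have hseq : forall n : nat, exists x, [/\ `|x| = 1, 1 - n.+1%:R^-1 < `|T x|,
    eta <= `|x - x0| & eta <= `|x + x0|].
  move=> n; apply: contrapT => hn; apply: H; exists n.+1%:R^-1; split; first by rewrite invr_gt0.
  move=> x nx tx; apply: contrapT => hor; apply: hn; exists x; split => //.
    by rewrite leNgt; apply/negP => hlt; apply: hor; left.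
  by rewrite leNgt; apply/negP => hlt; apply: hor; right.
have [x hx] := choice hseq.
have [h0 [h0d h0b h0x]] := HB_dual x0.
rewrite n0 in h0x.
pose w n := if 0 <= h0 (x n) then x n else - x n.
have wP : forall n, [/\ `|w n| = 1, 1 - n.+1%:R^-1 < `|T (w n)|, 0 <= h0 (w n),
    eta <= `|w n - x0| & eta <= `|w n + x0|].
  move=> n; have [a1 a2 a3 a4] := hx n; rewrite /w.
  case: ifP => hp; first by split.
  split.
  - by rewrite normrN.
  - by rewrite (linN Tl) normrN.
  - rewrite (linN (proj1 h0d)) oppr_ge0; move/negbT: hp; rewrite -ltNge; exact: ltW.
  - by rewrite -opprD normrN.
  - by rewrite addrC distrC.
have wc : (fun n => `|T (w n)|) @ \oo --> (1:R).
  by apply: norming_seq_cvg => n; have [a b _ _ _] := wP n; rewrite ?a.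
have wk : weak_cvg w x0.
  move=> f fd; apply: contrapT => nc.
  have [e [e0 he]] : exists e : R, 0 < e /\ forall N, exists n, (N <= n)%N /\ e <= `|f x0 - f (w n)|.
    apply: contrapT => hne; apply: nc; apply/cvgrPdist_lt => e e0.
    apply: contrapT => hnear; apply: hne; exists e; split => // N.
    apply: contrapT => hN; apply: hnear; exists N => // n /= Nn.
    by rewrite ltNge; apply/negP => hle; apply: hN; exists n.
  pose B N := [set n | (N <= n)%N /\ e <= `|f x0 - f (w n)|].
  have GF : Filter (filter_from [set: nat] B).
    apply: filter_from_filter; first by exists 0%N.
    move=> i j _ _; exists (maxn i j) => // n [hn hb]; split; split => //.
    + by apply: leq_trans hn; exact: leq_maxl.
    + by apply: leq_trans hn; exact: leq_maxr.
  have GP : ProperFilter (filter_from [set: nat] B).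
    apply: filter_from_proper => N _; have [n [hn hb]] := he N; by exists n.
  have [U [UU GU]] := ultraFilterLemma GP.
  have oU : \oo `<=` U.
    move=> A [N _ hA]; apply: GU; exists N => // n [hn _]; exact: hA.
  have w1 : forall n, `|w n| <= 1 by move=> n; have [hh _ _ _ _] := wP n; rewrite hh.
  have [z [nz tz hz]] := norming_ulim UU w1 oU wc.
  have [zx|zx] := norming_unique sm nz tz n0 t0; last first.
    have : 0 <= h0 z.
      apply: (closed_cvg _ (@closed_ge _ _) _ _ (hz h0 h0d)).
      by apply: filterS filterT => n _ /=; have [_ _ hh _ _] := wP n.
    by rewrite zx (linN (proj1 h0d)) h0x oppr_ge0 leNgt ltr01.
  have := hz f fd; rewrite zx => /cvgrPdist_lt /(_ e e0) hU.
  have UB : U (B 0%N) by apply: GU; exists 0%N.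
  have [n [h1 [_ h2]]] := filter_ex (filterI hU UB).
  by move: h1; rewrite ltNge h2.
have hn : (fun n => `|w n|) @ \oo --> `|x0|.
  rewrite n0 (_ : (fun n => `|w n|) = fun _ => 1); first exact: cvg_cst.
  by apply/funext => n; have [hh _ _ _ _] := wP n.
have := KK w x0 wk hn => /cvgr0Pnorm_lt /(_ eta eta0) hK.
have [n h1] := filter_ex hK.
have [_ _ _ h3 _] := wP n.
by move: h1; rewrite ger0_norm // ltNge h3.
Qed.
End Main.

Lemma aux1 (R : realType) (r n : R) : r <= 1/4 -> -r <= n - 1 -> 3/4 <= n.
Proof. lra. Qed.
Lemma aux2 (R : realType) (r n d : R) : 0 < r -> 3/4 <= n -> 0 <= d -> n * d <= 2 * r -> d <= 4 * r.
Proof. nra. Qed.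
Lemma aux3 (R : realType) (r n a : R) : `|n - 1| <= r -> a <= r -> a + `|1 - n| <= 2 * r.
Proof. rewrite distrC. lra. Qed.

Section Final.
Variables (R : realType) (X Y : normedModType R).

Lemma lin_comb (f g : X -> Y) (a b : R) : is_linear f -> is_linear g ->
  is_linear (fun x => a *: f x + b *: g x).
Proof.
move=> fl gl c x y; rewrite fl gl !scalerDr !scalerA [a * c]mulrC [b * c]mulrC.
by rewrite addrACA -!scalerA.
Qed.

Lemma rank1_lin (h : X -> R) (y : Y) : dual_elt h -> is_linear (fun z => h z *: y).
Proof. by move=> hd a x z /=; rewrite (dual_lin hd) scalerDl scalerA. Qed.

Variable (T : X -> Y).
Hypotheses (refl : reflexive_space X) (cT : compact_op T) (nT : opnorm T = 1)
  (sm : smooth_point_K T) (KK : kadets_klee X).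

Let Tl : is_linear T. Proof. by case: cT. Qed.

Lemma bpb_of x0 (A : X -> Y) eps : `|x0| = 1 -> `|T x0| = 1 -> 0 < eps ->
  is_linear A -> (forall z, `|A z| <= `|z|) -> `|A x0| = 1 ->
  opnorm (fun x => A x - T x) < eps -> uniform_BPB_approx T A eps.
Proof.
move=> n0 t0 e0 Al Ab A0 AT.
have Abd : exists M, forall x, `|A x| <= M * `|x| by exists 1 => x; rewrite mul1r.
have nA : opnorm A = 1.
  apply/eqP; rewrite eq_le; apply/andP; split.
    by apply: opnorm_le2 => // z; rewrite mul1r.
  by rewrite -A0; apply: opnorm_ball => //; rewrite n0.
split; first by split.
split => //.
have [delta [d0 hd]] := clustering refl cT nT sm KK n0 t0 e0.
exists delta; split => // x nx tx.
case: (hd x nx tx) => h.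
  by exists x0; split => //; rewrite distrC.
exists (- x0); split.
- by rewrite normrN.
- by rewrite (linN Al) normrN.
- by rewrite -opprD normrN addrC.
- by [].
Qed.


Lemma case_a x0 (h0 : X -> R) eps : `|x0| = 1 -> `|T x0| = 1 -> 0 < eps ->
  dual_elt h0 -> (forall z, `|h0 z| <= `|z|) -> h0 x0 = 1 ->
  (exists z, T z <> h0 z *: T x0) ->
  exists A : X -> Y, uniform_BPB_approx T A eps /\ A <> T.
Proof.
move=> n0 t0 e0 h0d h0b h0x [z0 hz0].
set y0 := T x0.
have [l [l0 l1 l2]] : exists l : R, [/\ 0 < l, l <= 1 & 2 * l < eps].
  exists (eps / (eps + 2)).
  have e2 : 0 < eps + 2 by lra.
  have le : eps / (eps + 2) * (eps + 2) = eps by rewrite divfK // gt_eqF.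
  have l0 : 0 < eps / (eps + 2) by rewrite divr_gt0.
  move: le l0; generalize (eps / (eps + 2)) => l le l0.
  split => //; nra.
pose A z := (1 - l) *: T z + l *: (h0 z *: y0).
have Al : is_linear A by apply: lin_comb => //; exact: rank1_lin.
have ATE : forall z, A z - T z = l *: (h0 z *: y0 - T z).
  move=> z; rewrite /A scalerBl scale1r scalerBr.
  rewrite addrAC (addrAC (T z)) subrr add0r addrC.
  by [].
have Ab : forall z, `|A z| <= `|z|.
  move=> z; rewrite /A; apply: le_trans (ler_normD _ _) _.
  rewrite !normrZ (ger0_norm (ltW l0)) ger0_norm ?subr_ge0 // t0 mulr1.
  have a1 : (1 - l) * `|T z| <= (1 - l) * `|z|.
    by apply: ler_wpM2l; [rewrite subr_ge0|exact: T_le].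
  have a2 : l * `|h0 z| <= l * `|z| by apply: ler_wpM2l; [exact: ltW|exact: h0b].
  lra.
have A0 : `|A x0| = 1 by rewrite /A h0x scale1r -scalerDl subrK scale1r.
exists A; split.
  apply: (bpb_of n0 t0 e0 Al Ab A0).
  apply: le_lt_trans l2; apply: opnorm_le2; first by nra.
  move=> z; rewrite ATE normrZ (ger0_norm (ltW l0)) [2 * l]mulrC -mulrA; apply: ler_wpM2l; first exact: ltW.
  apply: le_trans (ler_normB _ _) _; rewrite normrZ t0 mulr1.
  have := h0b z; have := T_le cT nT z; lra.
move=> eA; apply: hz0.
have := ATE z0; rewrite eA subrr => /esym /eqP; rewrite scaler_eq0 gt_eqF //=.
by rewrite subr_eq0 => /eqP ->.
Qed.

Lemma case_b x0 (h0 : X -> R) eps : dim_gt1 Y -> `|x0| = 1 -> `|T x0| = 1 -> 0 < eps ->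
  dual_elt h0 -> (forall z, `|h0 z| <= `|z|) -> h0 x0 = 1 ->
  (forall z, T z = h0 z *: T x0) ->
  exists A : X -> Y, uniform_BPB_approx T A eps /\ A <> T.
Proof.
move=> [a [b hab]] n0 t0 e0 h0d h0b h0x hT.
set y0 := T x0.
have [v hv] : exists v : Y, forall c : R, v <> c *: y0.
  apply: contrapT => H.
  have hm : forall w : Y, exists c : R, w = c *: y0.
    move=> w; apply: contrapT => hw; apply: H; exists w => c hc; apply: hw; by exists c.
  have [ca ea] := hm a; have [cb eb] := hm b.
  have [c1 c2] : cb = 0 /\ - ca = 0.
    apply: hab; rewrite ea eb !scalerA -scalerDl.
    by rewrite mulNr mulrC subrr scale0r.
  have := hab 1 0; rewrite scale1r scale0r addr0 ea.
  move/eqP: c2; rewrite oppr_eq0 => /eqP ->; rewrite scale0r => /(_ erefl) [/eqP].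
  by rewrite oner_eq0.
have vn0 : v != 0 by apply/eqP => v0; apply: (hv 0); rewrite scale0r.
have nv : 0 < `|v| by rewrite normr_gt0.
have [r [r0 r1 r2]] : exists r : R, [/\ 0 < r, r <= 1/4 & 4 * r < eps].
  exists (eps / (4 * eps + 8)).
  have e2 : 0 < 4 * eps + 8 by lra.
  have le : eps / (4 * eps + 8) * (4 * eps + 8) = eps by rewrite divfK // gt_eqF.
  have l0 : 0 < eps / (4 * eps + 8) by rewrite divr_gt0.
  move: le l0; generalize (eps / (4 * eps + 8)) => l le l0.
  split => //; nra.
set t := r / `|v|.
have t0' : 0 < t by rewrite divr_gt0.
have ntv : `|t *: v| = r by rewrite normrZ gtr0_norm // divfK // gt_eqF.
set s := y0 + t *: v.
have hs1 : `| `|s| - 1| <= r.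
  by rewrite -t0; apply: le_trans (ler_dist_dist _ _) _; rewrite /s addrC addKr ntv.
set ns := `|s|.
have ns34 : 3/4 <= ns.
  move: hs1; rewrite ler_norml => /andP [h1 h2]; exact: aux1 r1 h1.
have nsp : 0 < ns by apply: lt_le_trans ns34; lra.
set y1 := ns^-1 *: s.
have ny1 : `|y1| = 1 by rewrite /y1 normrZ gtr0_norm ?invr_gt0 // mulVf // gt_eqF.
have y1ne : y1 != y0.
  apply/eqP => e; apply: (hv ((ns - 1) / t)).
  have e1 : s = ns *: y0 by rewrite -e /y1 scalerA mulfV ?gt_eqF // scale1r.
  have e2 : t *: v = (ns - 1) *: y0.
    by rewrite scalerBl scale1r -e1 /s addrC addKr.
  by rewrite mulrC -scalerA -e2 scalerA mulVf ?gt_eqF // scale1r.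
have dy : `|y1 - y0| <= 4 * r.
  have e1 : ns *: (y1 - y0) = t *: v + (1 - ns) *: y0.
    rewrite scalerBr /y1 scalerA mulfV ?gt_eqF // scale1r /s scalerBl scale1r.
    by rewrite addrA (addrC y0).
  have : ns * `|y1 - y0| <= 2 * r.
    have := congr1 (fun u : Y => `|u|) e1; rewrite normrZ gtr0_norm // => ->.
    apply: le_trans (ler_normD _ _) _; rewrite ntv normrZ t0 mulr1.
    exact: aux3 hs1 (lexx r).
  by move=> h; apply: aux2 r0 ns34 (normr_ge0 _) h.
pose A z := h0 z *: y1.
have Al : is_linear A by exact: rank1_lin.
have Ab : forall z, `|A z| <= `|z| by move=> z; rewrite /A normrZ ny1 mulr1.
have A0 : `|A x0| = 1 by rewrite /A h0x scale1r.
exists A; split.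
  apply: (bpb_of n0 t0 e0 Al Ab A0).
  apply: le_lt_trans r2; apply: (le_trans _ dy); apply: opnorm_le2 => // z.
  rewrite /A hT -scalerBr normrZ mulrC ler_wpM2l //.
move=> eA; move/eqP: y1ne; apply.
have := congr1 (fun F => F x0) eA; rewrite /A /= h0x scale1r => ->.
by [].
Qed.

End Final.

Theorem theorem2p6 (R : realType) (X Y : completeNormedModType R)
  (T : X -> Y) :
  reflexive_space X -> kadets_klee X -> dim_gt1 X -> dim_gt1 Y ->
  compact_op T -> opnorm T = 1 -> smooth_point_K T ->
  forall eps : R, 0 < eps ->
    exists A : X -> Y, uniform_BPB_approx T A eps /\ A <> T.
Proof.
move=> refl KK _ dY cT nT sm eps e0.
have [x0 [n0 t0]] := exists_norming refl cT nT.
have [h0 [h0d h0b h0x]] := HB_dual x0.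
rewrite n0 in h0x.
case: (pselect (exists z, T z <> h0 z *: T x0)) => [hz|hz].
  exact: (case_a refl cT nT sm KK n0 t0 e0 h0d h0b h0x hz).
apply: (case_b refl cT nT sm KK dY n0 t0 e0 h0d h0b h0x) => z.
by apply: contrapT => hn; apply: hz; exists z.
Qed.
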